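(* Let $\Omega$ be a finite set and $f:2^{\Omega}\to\mathbb{R}$ increasing with $f(\emptyset)=0$. Let $H_f=\mathrm{conv}\{(x(\mathcal{S}),z)\in\mathbb{R}^{|\Omega|}\times\mathbb{R}:\mathcal{S}\subseteq\Omega,\ f(\mathcal{S})\le z\}$. Suppose $\gamma\in\mathbb{R}^{|\Omega|}$, $\gamma_0\in\mathbb{R}$, and the inequality $\sum_{s\in\Omega}\gamma_sx_s\le z+|\Omega|D[f]+\gamma_0$ defines a nontrivial facet of $H_f$. Let $\bar f:2^{\Omega}\to\mathbb{R}$ be defined by $\bar f(\emptyset)=0$ and $\bar f(\mathcal{S})=f(\mathcal{S})+|\Omega|D[f]+\gamma_0$ for all nonempty $\mathcal{S}\subseteq\Omega$, and suppose $\gamma\in\Gamma(\bar f)$. Then $\gamma_0\le0$.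
   Context: $x(\mathcal{S})$ is the characteristic vector of $\mathcal{S}$. A facet is nontrivial if it is not defined by a variable bound inequality. For a set function $h$ and permutation $\pi$ of $\Omega$, $\mathcal{S}^\pi_0=\emptyset$, $\mathcal{S}^\pi_k=\{\pi_1,\dots,\pi_k\}$; $\Gamma(h)=\{\gamma\in\mathbb{R}^{|\Omega|}:\exists$ permutation $\pi$ with $\gamma_{\pi_i}=h(\mathcal{S}^\pi_i)-h(\mathcal{S}^\pi_{i-1})$ for all $i\}$. $D[f]=\max\{f(\mathcal{A}\cup\mathcal{B}\cup\{s\})-f(\mathcal{A}\cup\mathcal{B})-f(\mathcal{A}\cup\{s\})+f(\mathcal{A}):\mathcal{A},\mathcal{B}\subseteq\Omega,s\in\Omega,|\mathcal{A}|\le|\Omega|-1\}$. *)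

(* Defs.v *)
From mathcomp Require Import all_boot all_order all_algebra.
Set Implicit Arguments. Unset Strict Implicit. Unset Printing Implicit Defensive.
Import Order.TTheory GRing.Theory Num.Theory.
Local Open Scope ring_scope.

Section Defs.
Variables (R : realFieldType) (Omega : finType).

Definition pt := ((Omega -> R) * R)%type.

Definition charvec (S : {set Omega}) : Omega -> R :=
  fun s => if s \in S then 1 else 0.

Definition conv (G : pt -> Prop) (p : pt) : Prop :=
  exists (n : nat) (w : 'I_n -> R) (q : 'I_n -> pt),
    [/\ forall i, 0 <= w i,
        \sum_(i < n) w i = 1,
        forall i, G (q i),
        forall s, p.1 s = \sum_(i < n) w i * (q i).1 s
      & p.2 = \sum_(i < n) w i * (q i).2].

Definition Hf (f : {set Omega} -> R) : pt -> Prop :=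
  conv (fun p => exists S : {set Omega}, p.1 = charvec S /\ f S <= p.2).

Definition aff_indep (k : nat) (q : 'I_k -> pt) : Prop :=
  forall lam : 'I_k -> R,
    \sum_(i < k) lam i = 0 ->
    (forall s, \sum_(i < k) lam i * (q i).1 s = 0) ->
    \sum_(i < k) lam i * (q i).2 = 0 ->
    forall i, lam i = 0.

Definition aff_dim (P : pt -> Prop) (d : nat) : Prop :=
  (exists q : 'I_d.+1 -> pt, (forall i, P (q i)) /\ aff_indep q) /\
  ~ (exists q : 'I_d.+2 -> pt, (forall i, P (q i)) /\ aff_indep q).

Definition lform (a : Omega -> R) (b : R) (p : pt) : R :=
  \sum_(s : Omega) a s * p.1 s + b * p.2.

Definition face (P : pt -> Prop) (a : Omega -> R) (b c : R) (p : pt) : Prop :=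
  P p /\ lform a b p = c.

Definition defines_facet (P : pt -> Prop) (a : Omega -> R) (b c : R) : Prop :=
  (forall p, P p -> lform a b p <= c) /\
  exists d : nat, aff_dim P d.+1 /\ aff_dim (face P a b c) d.

Definition unitvec (t : Omega) : Omega -> R := fun s => if s == t then 1 else 0.

(* the facet defined by a.x + bz <= c is nontrivial: it is not the face
   defined by a variable bound inequality x_t >= 0 or x_t <= 1 *)
Definition nontrivial_facet (P : pt -> Prop) (a : Omega -> R) (b c : R) : Prop :=
  forall t : Omega,
    (face P a b c <> face P (fun s => - unitvec t s) 0 0) /\
    (face P a b c <> face P (unitvec t) 0 1).

Definition Dmax (f : {set Omega} -> R) : R :=
  \big[Num.max/0]_(A : {set Omega}) \big[Num.max/0]_(B : {set Omega})
   \big[Num.max/0]_(s : Omega | (#|A| <= #|Omega| - 1)%N)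
     (f (A :|: B :|: [set s]) - f (A :|: B) - f (A :|: [set s]) + f A).

(* Gamma(h): gamma_{pi_i} = h(S_i) - h(S_{i-1}) for a permutation pi,
   written 0-indexed with pi : 'I_#|Omega| -> Omega bijective and
   S^pi_k = {pi_0, ..., pi_{k-1}} *)
Definition Spi (pi : 'I_#|Omega| -> Omega) (k : nat) : {set Omega} :=
  [set pi j | j : 'I_#|Omega| & (j < k)%N].

Definition inGamma (h : {set Omega} -> R) (gamma : Omega -> R) : Prop :=
  exists pi : 'I_#|Omega| -> Omega, bijective pi /\
    forall i : 'I_#|Omega|, gamma (pi i) = h (Spi pi i.+1) - h (Spi pi i).

Definition increasing (f : {set Omega} -> R) : Prop :=
  forall S T : {set Omega}, S \subset T -> f S <= f T.

End Defs.

(* Main.v *)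
Require Import Defs.
From mathcomp Require Import all_boot all_order all_algebra.
From mathcomp Require Import ring lra zify.
Import Order.TTheory GRing.Theory Num.Theory.
Local Open Scope ring_scope.
Set Implicit Arguments. Unset Strict Implicit.

Section Aux.
Variables (R : realFieldType) (Omega : finType).
Implicit Types (f : {set Omega} -> R).

Lemma Dmax_ge0 f : 0 <= Dmax f.
Proof. exact: bigmax_ge_id. Qed.

Lemma Dmax_ge f (A B : {set Omega}) (s : Omega) : (#|A| <= #|Omega| - 1)%N ->
  f (A :|: B :|: [set s]) - f (A :|: B) - f (A :|: [set s]) + f A <= Dmax f.
Proof.
move=> hA; rewrite /Dmax.
apply: le_trans (le_bigmax _ _ A).
apply: le_trans (le_bigmax _ _ B).
exact: (le_bigmax_cond _ (j:=s)).
Qed.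

Variables (f : {set Omega} -> R) (gamma : Omega -> R) (c : R).

Definition gS (S : {set Omega}) := \sum_s gamma s * charvec R S s.
Definition tight S := c <= gS S - f S.

Lemma gS_in S : gS S = \sum_(s in S) gamma s.
Proof.
rewrite /gS [RHS]big_mkcond; apply: eq_bigr => s _; rewrite /charvec.
by case: (s \in S); rewrite ?mulr1 ?mulr0.
Qed.

Lemma pt_in_Hf S z : f S <= z -> Hf f (charvec R S, z).
Proof.
move=> hz; exists 1%N, (fun _ => 1), (fun _ => (charvec R S, z)); split.
- by move=> _; exact: ler01.
- by rewrite big_ord1.
- by move=> _; exists S.
- by move=> s; rewrite big_ord1 mul1r.
- by rewrite big_ord1 mul1r.
Qed.

Hypothesis valid : forall p, Hf f p -> lform gamma (-1) p <= c.

Lemma lform_pt S z : lform gamma (-1) (charvec R S, z) = gS S - z.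
Proof. by rewrite /lform /= mulN1r. Qed.

Lemma valid_set S : gS S - f S <= c.
Proof. by rewrite -lform_pt; apply: valid; apply: pt_in_Hf. Qed.

Lemma face_decomp p : face (Hf f) gamma (-1) c p ->
  exists m (w : 'I_m -> R) (q : 'I_m -> pt R Omega),
  [/\ \sum_(i < m) w i = 1,
      forall s, p.1 s = \sum_(i < m) w i * (q i).1 s
    & forall i, w i != 0 -> exists S, (q i).1 = charvec R S /\ tight S].
Proof.
case=> [[m [w [q [w0 w1 Gq e1 e2]]]] hl].
exists m, w, q; split => // i wi.
have [S [qS fS]] := Gq i; exists S; split => //.
pose a j := c - lform gamma (-1) (q j).
have a0 : forall j, 0 <= a j.
  move=> j; have [S' [qS' fS']] := Gq j.
  rewrite /a subr_ge0 /lform qS' -/(gS S') mulN1r.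
  by apply: le_trans (valid_set S'); rewrite lerB.
have lp : lform gamma (-1) p = \sum_(i < m) w i * lform gamma (-1) (q i).
  rewrite /lform e2 (eq_bigr (fun s => \sum_(i < m) w i * (gamma s * (q i).1 s))); last first.
    by move=> s _; rewrite e1 mulr_sumr; apply: eq_bigr => j _; rewrite mulrCA.
  rewrite exchange_big /= mulr_sumr -big_split /=; apply: eq_bigr => j _.
  by rewrite mulrDr mulr_sumr mulrCA.
have sa : \sum_(i < m) w i * a i = 0.
  rewrite /a (eq_bigr (fun i => c * w i - w i * lform gamma (-1) (q i))); last first.
    by move=> j _; rewrite mulrBr mulrC.
  by rewrite sumrB -mulr_sumr w1 mulr1 -lp hl subrr.
have := psumr_eq0P (fun i _ => mulr_ge0 (w0 i) (a0 i)) sa (i:=i) isT.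
move/eqP; rewrite mulf_eq0 (negbTE wi) /= /a subr_eq0 => /eqP hc.
rewrite /tight hc /lform qS -/(gS S) mulN1r; exact: lerB.
Qed.


Lemma face_tight p : face (Hf f) gamma (-1) c p -> exists S, tight S.
Proof.
move=> /face_decomp [m [w [q [w1 _ hw]]]].
have : ~~ [forall i, w i == 0].
  apply/negP => /forallP h; move: w1; rewrite big1 => [|i _]; last exact/eqP.
  by move/eqP; rewrite eq_sym oner_eq0.
rewrite negb_forall => /existsP [i wi].
by have [S [_ ?]] := hw i wi; exists S.
Qed.

Lemma face_coord t p : (forall S, tight S -> t \in S) ->
  face (Hf f) gamma (-1) c p -> p.1 t = 1.
Proof.
move=> ht /face_decomp [m [w [q [w1 e1 hw]]]].
rewrite e1 -w1; apply: eq_bigr => i _.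
have [->|wi] := eqVneq (w i) 0; first by rewrite mul0r.
have [S [-> /ht tS]] := hw i wi; by rewrite /charvec tS mulr1.
Qed.

Hypothesis f0 : f set0 = 0.

Lemma dim_contra t d : (forall S, tight S -> t \in S) ->
  (exists q : 'I_d.+1 -> pt R Omega,
     (forall i, face (Hf f) gamma (-1) c (q i)) /\ aff_indep q) ->
  (exists q : 'I_d.+3 -> pt R Omega, (forall i, Hf f (q i)) /\ aff_indep q).
Proof.
move=> ht [q [qF qI]].
have q1 : forall i, (q i).1 t = 1 by move=> i; exact: face_coord ht (qF i).
have q2 : forall i, (q i).2 = \sum_s gamma s * (q i).1 s - c.
  move=> i; have [_ hl] := qF i; move: hl; rewrite /lform mulN1r => <-.
  by rewrite opprB addrC subrK.
pose z0 : pt R Omega := (charvec R set0, 0).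
pose z1 : pt R Omega := (charvec R set0, 1).
have cv0 : forall s : Omega, charvec R set0 s = 0.
  by move=> s; rewrite /charvec inE.
pose q' (i : 'I_d.+3) := if (i < d.+1)%N then q (inord i)
  else if val i == d.+1 then z0 else z1.
pose w2 (j : 'I_d.+1) : 'I_d.+3 := widen_ord (leqnSn _) (widen_ord (leqnSn _) j).
have qw2 : forall j, q' (w2 j) = q j.
  move=> j; rewrite /q' /= ltn_ord; congr q; apply: val_inj; exact: inordK.
have qa : q' (widen_ord (leqnSn _) ord_max) = z0 by rewrite /q' /= ltnn eqxx.
have qb : q' ord_max = z1 by rewrite /q' /= ltnNge leqnSn /= eqn_leq ltnn.
have sumE : forall F : 'I_d.+3 -> R, \sum_i F i =
   \sum_(j < d.+1) F (w2 j) + F (widen_ord (leqnSn _) ord_max) + F ord_max.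
  by move=> F; rewrite !big_ord_recr.
exists q'; split.
  move=> i; rewrite /q'; case: ifP => _; first by case: (qF (inord i)).
  by case: ifP => _; apply: pt_in_Hf; rewrite f0 ?lexx ?ler01.
move=> lam hs hx hz.
pose mu j := lam (w2 j).
have hx' : forall s, \sum_(j < d.+1) mu j * (q j).1 s = 0.
  move=> s; move: (hx s); rewrite sumE qa qb /= !cv0 !mulr0 !addr0.
  by under eq_bigr do rewrite qw2.
have smu : \sum_(j < d.+1) mu j = 0.
  by rewrite -[RHS](hx' t); apply: eq_bigr => j _; rewrite q1 mulr1.
move: hs; rewrite sumE smu add0r => hab.
have hz' : \sum_(j < d.+1) mu j * (q j).2 = 0.
  under eq_bigr do rewrite q2 mulrBr mulr_sumr.
  rewrite sumrB -mulr_suml smu mul0r subr0 exchange_big /=.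
  rewrite big1 // => s _; rewrite -[RHS](mulr0 (gamma s)) -[X in _ * X](hx' s) mulr_sumr.
  by apply: eq_bigr => j _; rewrite mulrCA.
move: hz; rewrite sumE qa qb /=.
under eq_bigr do rewrite qw2.
rewrite hz' add0r mulr0 add0r mulr1 => lb0.
move: hab; rewrite lb0 addr0 => la0.
have mu0 : forall j, mu j = 0 by apply: qI => //; exact: hz'.
move=> i; case: (ltngtP i d.+1) => hi.
- by have := mu0 (inord i); rewrite /mu; congr (lam _ = 0); apply: val_inj; rewrite /= inordK.
- have -> : i = ord_max by apply: val_inj => /=; move: (ltn_ord i); lia.
  exact: lb0.
- have -> : i = widen_ord (leqnSn _) ord_max by apply: val_inj.
  exact: la0.
Qed.
End Aux.
Section Bound.
Variables (R : realFieldType) (Omega : finType).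
Variables (f : {set Omega} -> R) (gamma : Omega -> R) (c : R) (h : {set Omega} -> R).
Variable pi : 'I_#|Omega| -> Omega.
Hypothesis pib : bijective pi.
Hypothesis hh : forall S, S != set0 -> h S = f S + c.
Hypothesis hg : forall i : 'I_#|Omega|, gamma (pi i) = h (Spi pi i.+1) - h (Spi pi i).
Hypothesis f0 : f set0 = 0.

Lemma Spi0 : Spi pi 0 = set0.
Proof. by apply/setP => x; rewrite inE; apply/imsetP => -[j]; rewrite inE ltn0. Qed.

Lemma SpiS (i : 'I_#|Omega|) : Spi pi i.+1 = pi i |: Spi pi i.
Proof.
apply/setP => x; rewrite !inE; apply/imsetP/orP.
- case=> j; rewrite inE ltnS leq_eqVlt => /orP [/eqP/val_inj -> ->|ji ->].
    by left.
  by right; apply/imsetP; exists j; rewrite ?inE.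
- case=> [/eqP ->|/imsetP [j]]; first by exists i; rewrite ?inE.
  by rewrite inE => ji ->; exists j; rewrite // inE ltnS ltnW.
Qed.

Lemma SpiS' k (hk : (k < #|Omega|)%N) : Spi pi k.+1 = pi (Ordinal hk) |: Spi pi k.
Proof. exact: (SpiS (Ordinal hk)). Qed.

Lemma Spi_notin (i : 'I_#|Omega|) : pi i \notin Spi pi i.
Proof.
apply/imsetP => -[j]; rewrite inE => ji /(bij_inj pib) ij.
by move: ji; rewrite ij ltnn.
Qed.

Lemma Spi_n : Spi pi #|Omega| = setT.
Proof.
apply/setP => x; rewrite inE; apply/imsetP.
have [g _ gK] := pib.
by exists (g x); rewrite ?inE ?gK.
Qed.

Lemma Spi_ne0 (n0 : (0 < #|Omega|)%N) k : (0 < k)%N -> Spi pi k != set0.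
Proof.
move=> k0; apply/set0Pn; exists (pi (Ordinal n0)); apply/imsetP.
by exists (Ordinal n0); rewrite ?inE.
Qed.

Lemma bound (n0 : (0 < #|Omega|)%N) (S : {set Omega}) : pi (Ordinal n0) \notin S ->
  \sum_(s in S) gamma s - f S <= #|S|%:R * Dmax f.
Proof.
move=> nS.
suff H : forall k, (k <= #|Omega|)%N ->
  \sum_(s in S :&: Spi pi k) gamma s - f (S :&: Spi pi k)
     <= #|S :&: Spi pi k|%:R * Dmax f.
  by have := H _ (leqnn _); rewrite Spi_n setIT.
elim=> [|k IH] hk.
  by rewrite Spi0 setI0 big_set0 cards0 f0 subrr mul0r.
have IH' := IH (ltnW hk).
rewrite SpiS' setIUr.
set i := Ordinal hk.
case: (boolP (pi i \in S)) => piS; last first.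
  suff -> : S :&: [set pi i] = set0 by rewrite set0U.
  by apply/setP => x; rewrite !inE; apply/andP => -[xS /eqP xe]; move: piS; rewrite -xe xS.
have -> : S :&: [set pi i] = [set pi i].
  by apply/setP => x; rewrite !inE; case: (x =P pi i) => [->|]; rewrite ?piS ?andbF.
set A := S :&: Spi pi k.
have nA : pi i \notin A by rewrite inE negb_and (Spi_notin i) orbT.
rewrite -[set1.body _]/[set pi i] big_setU1 //=. rewrite cardsU1 nA.
have k0 : (0 < k)%N.
  rewrite lt0n; apply/eqP => k0; move: nS.
  have -> : Ordinal n0 = i by apply: val_inj; rewrite /= k0.
  by rewrite piS.
have hgi : gamma (pi i) = f (pi i |: Spi pi k) - f (Spi pi k).
  rewrite hg /= -(SpiS' hk) !hh ?Spi_ne0 //; first by ring.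
have cA : (#|A| <= #|Omega| - 1)%N.
  have : A \proper setT.
    rewrite properT; apply/eqP => AT; move: nS.
    have : pi (Ordinal n0) \in A by rewrite AT inE.
    by rewrite inE => /andP [->].
  move=> /proper_card; rewrite cardsT; lia.
have := @Dmax_ge R Omega f A (Spi pi k) (pi i) cA.
have -> : A :|: Spi pi k = Spi pi k by apply/setUidPr; exact: subsetIr.
rewrite [Spi pi k :|: _]setUC [A :|: _]setUC => hD.
rewrite hgi natrD mulrDl mul1r; lra.
Qed.
End Bound.

Theorem mainTheorem10 (R : realFieldType) (Omega : finType)
  (f : {set Omega} -> R) (gamma : Omega -> R) (gamma0 : R) :
  increasing f ->
  f set0 = 0 ->
  (* sum_s gamma_s x_s <= z + |Omega| D[f] + gamma0, i.e. gamma.x - z <= c *)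
  defines_facet (Hf f) gamma (-1) (#|Omega|%:R * Dmax f + gamma0) ->
  nontrivial_facet (Hf f) gamma (-1) (#|Omega|%:R * Dmax f + gamma0) ->
  inGamma (fun S : {set Omega} =>
             if S == set0 then 0 else f S + #|Omega|%:R * Dmax f + gamma0)
          gamma ->
  gamma0 <= 0.
Proof.
move=> _ f0 [valid [d [dimH dimF]]] _ [pi [pib hg]].
set c := #|Omega|%:R * Dmax f + gamma0 in valid dimH dimF hg *.
rewrite leNgt; apply/negP => g0.
have D0 := Dmax_ge0 f.
have hh : forall S : {set Omega}, S != set0 ->
   (fun S : {set Omega} => if S == set0 then 0 else f S + #|Omega|%:R * Dmax f + gamma0) S = f S + c.
  by move=> S /negbTE /= ->; rewrite addrA.
case: (boolP (0 < #|Omega|)%N) => n0.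
  pose t := pi (Ordinal n0).
  have ht : forall S, tight f gamma c S -> t \in S.
    move=> S tS; apply: contraT => nS.
    have := bound pib hh hg f0 nS.
    move: tS; rewrite /tight gS_in => tS hb.
    have : (#|S|%:R * Dmax f <= #|Omega|%:R * Dmax f :> R).
      by apply: ler_wpM2r => //; rewrite ler_nat max_card.
    rewrite /c in tS; lra.
  by apply: (proj2 dimH); apply: (dim_contra valid f0 ht (proj1 dimF)).
have [q [qF _]] := proj1 dimF.
have [S tS] := face_tight valid (qF ord0).
have S0 : S = set0.
  apply/eqP; rewrite -cards_eq0 -leqn0; apply: leq_trans (max_card _) _.
  by rewrite leqNgt.
move: tS; rewrite /tight S0 gS_in big_set0 f0 subrr /c.
have -> : #|Omega| = 0%N by apply/eqP; rewrite -leqn0 leqNgt.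
rewrite mul0r add0r; lra.
Qed.
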